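(* Let $G$ be a finite group and $\mathcal{P}$ a prime ideal of $\mathrm{Gh}(\underline{A}_G)$ with $\mathcal{P}(G/e)=(0)\subseteq\mathbb{Z}$. For $I\le G$ let $p_I\ge0$ be the integer with $\mathcal{P}(G/G)=\widetilde{A}(G)\cap\prod_{I\le G}p_I\mathbb{Z}$, and set $\mathscr{F}(\mathcal{P})=\{I\le G: p_I\ne1\}$ and $\mathscr{F}_0=\{I\le G:p_I=0\}$. Then $\mathscr{F}(\mathcal{P})=\mathscr{F}_0$ and $\mathcal{P}=\mathcal{P}_{\mathscr{F}(\mathcal{P}),0}$.
   Context: For $H\le G$, $\widetilde{A}(H)$ is the subring of $\prod_{I\le H}\mathbb{Z}$ of tuples $(a_I)_{I\le H}$ with $a_{hIh^{-1}}=a_I$ for $h\in H$ (so $\widetilde{A}(e)=\mathbb{Z}$). $\mathrm{Gh}(\underline{A}_G)$ is the $G$-Tambara functor with $\mathrm{Gh}(\underline{A}_G)(G/H)=\widetilde{A}(H)$ and, for $H\le K$, $g\in G$, $I^g=g^{-1}Ig$: $\mathrm{res}^K_H(b)_L=b_L$; $\mathrm{tr}^K_H(a)_I=\sum_{kH\in K/H,\ I^k\le H}a_{I^k}$; $\mathrm{nm}^K_H(a)_I=\prod_{IgH\in I\backslash K/H}a_{I^g\cap H}$; $c_{g,H}(a)_J=a_{J^g}$ for $J\le gHg^{-1}$. For a set $\mathscr{F}$ of subgroups closed under conjugation and $p$ a prime or $0$, $\mathcal{P}_{\mathscr{F},p}(G/H)=\widetilde{A}(H)\cap\prod_{I\le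 H}\delta(I)\mathbb{Z}$ where $\delta(I)=p$ if $I\in\mathscr{F}$ and $1$ otherwise. A Tambara ideal is a collection of ideals $\mathcal{I}(G/H)$ closed under all restrictions, transfers, norms and conjugations; it is prime (Nakaoka) if it is not everything and whenever $a\in T(G/K_1)$, $b\in T(G/K_2)$ satisfy $\big(\mathrm{nm}^L_{g_1H_1g_1^{-1}}c_{g_1,H_1}\mathrm{res}^{K_1}_{H_1}(a)\big)\big(\mathrm{nm}^L_{g_2H_2g_2^{-1}}c_{g_2,H_2}\mathrm{res}^{K_2}_{H_2}(b)\big)\in\mathcal{I}(G/L)$ for all $L,H_1,H_2\le G$, $g_1,g_2\in G$ with $H_i\le K_i$, $g_iH_ig_i^{-1}\le L$, then $a\in\mathcal{I}(G/K_1)$ or $b\in\mathcal{I}(G/K_2)$. *)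

(* Defs.v *)
From HB Require Import structures.
From mathcomp Require Import all_boot all_order all_algebra all_fingroup.
Set Implicit Arguments. Unset Strict Implicit. Unset Printing Implicit Defensive.
Import GRing.Theory Num.Theory.
Local Open Scope group_scope.

(* An element of Atilde(H) is a function a : {group gT} -> int,
   a I being the I-coordinate, required to vanish when I is not a subgroup
   of H.  I^g = g^-1 I g is mathcomp's (I :^ g); g H g^-1 is (H :^ g^-1). *)

Section GhostDefs.
Variable gT : finGroupType.

Definition func := {group gT} -> int.

Definition Atil (H : {group gT}) (a : func) : Prop :=
  (forall I : {group gT}, ~~ (I \subset H) -> a I = 0%R) /\
  (forall (I : {group gT}) (h : gT), I \subset H -> h \in H ->
       a (I :^ h)%G = a I).

Definition fzero : func := fun _ => 0%R.
Definition fadd (a b : func) : func := fun I => (a I + b I)%R.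
Definition fopp (a : func) : func := fun I => (- a I)%R.
Definition fmul (a b : func) : func := fun I => (a I * b I)%R.

(* res^K_H (the source K plays no role in the formula) *)
Definition res (H : {group gT}) (b : func) : func :=
  fun L => if L \subset H then b L else 0%R.

Definition tr (K H : {group gT}) (a : func) : func :=
  fun I => if I \subset K then
    (\sum_(C in lcosets H K | I :^ repr C \subset H) a (I :^ repr C)%G)%R
  else 0%R.

Definition dcosets (I H K : {set gT}) : {set {set gT}} :=
  [set ((I :* g) * H)%g | g in K].

Definition nm (K H : {group gT}) (a : func) : func :=
  fun I => if I \subset K then
    (\prod_(D in dcosets I H K) a ((I :^ repr D) :&: H)%G)%R
  else 0%R.

(* c_{g,H}(a)_J = a_{J^g}, landing in Atilde(g H g^-1) *)
Definition cj (g : gT) (a : func) : func := fun J => a (J :^ g)%G.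

Definition is_ideal (H : {group gT}) (S : func -> Prop) : Prop :=
  [/\ forall a, S a -> Atil H a,
      S fzero,
      forall a b, S a -> S b -> S (fadd a b),
      forall a, S a -> S (fopp a) &
      forall r a, Atil H r -> S a -> S (fmul r a)].

(* Tambara ideal of Gh(A_G); P H is the ideal P(G/H). *)
Definition tambara_ideal (G : {group gT}) (P : {group gT} -> func -> Prop) :=
  [/\ forall H : {group gT}, H \subset G -> is_ideal H (P H),
      forall (H K : {group gT}) b, H \subset K -> K \subset G ->
        P K b -> P H (res H b),
      forall (H K : {group gT}) a, H \subset K -> K \subset G ->
        P H a -> P K (tr K H a),
      forall (H K : {group gT}) a, H \subset K -> K \subset G ->
        P H a -> P K (nm K H a) &
      forall (H : {group gT}) g a, H \subset G -> g \in G ->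
        P H a -> P (H :^ g^-1)%G (cj g a)].

(* Prime in the sense of Nakaoka *)
Definition prime_tambara_ideal (G : {group gT}) (P : {group gT} -> func -> Prop) :=
  [/\ tambara_ideal G P,
      exists H : {group gT}, H \subset G /\ exists a, Atil H a /\ ~ P H a &
      forall (K1 K2 : {group gT}) (a b : func),
        K1 \subset G -> K2 \subset G -> Atil K1 a -> Atil K2 b ->
        (forall (L H1 H2 : {group gT}) (g1 g2 : gT),
            L \subset G -> H1 \subset K1 -> H2 \subset K2 ->
            g1 \in G -> g2 \in G ->
            H1 :^ g1^-1 \subset L -> H2 :^ g2^-1 \subset L ->
            P L (fmul (nm L (H1 :^ g1^-1)%G (cj g1 (res H1 a)))
                      (nm L (H2 :^ g2^-1)%G (cj g2 (res H2 b))))) ->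
        P K1 a \/ P K2 b].

Definition Pideal (F : {group gT} -> bool) (q : nat) (H : {group gT}) (a : func) : Prop :=
  Atil H a /\
  forall I : {group gT}, I \subset H ->
    (((if F I then q else 1%N)%:Z) %| a I)%Z.

End GhostDefs.

(* Main.v *)
Require Import Defs.
From HB Require Import structures.
From mathcomp Require Import all_boot all_order all_algebra all_fingroup.
From Stdlib Require Import FunctionalExtensionality.
Import GRing.Theory Num.Theory.
Local Open Scope group_scope.

Section Proof.
Variable gT : finGroupType.
Implicit Types (H K L I J : {group gT}) (a b : func gT).

Lemma funeq (a b : func gT) : (forall I, a I = b I) -> a = b.
Proof. move=> h; exact: functional_extensionality. Qed.

Definition cls H K : func gT := fun I =>
  if [exists l in H, (I : {set gT}) == K :^ l] then 1%R else 0%R.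

Lemma cls_sub H K I l : K \subset H -> l \in H -> (I : {set gT}) = K :^ l -> I \subset H.
Proof. by move=> sKH lH ->; rewrite -(conjGid lH) conjSg. Qed.
Arguments cls_sub {H K I l}.

Lemma cls_Atil H K : K \subset H -> Atil H (cls H K).
Proof.
move=> sKH; split.
  move=> I nI; rewrite /cls; case: existsP => // -[l /andP[lH /eqP e]].
  by rewrite (cls_sub sKH lH e) in nI.
move=> I h sIH hH; rewrite /cls /=.
congr (if _ then _ else _); apply/existsP/existsP => -[l /andP[lH /eqP e]].
  exists (l * h^-1); rewrite groupM ?groupV // conjsgM -e conjsgK eqxx //.
exists (l * h); rewrite groupM // conjsgM -e eqxx //.
Qed.

Lemma cls_self H K : cls H K K = 1%R.
Proof. by rewrite /cls; case: existsP => // -[]; exists 1; rewrite group1 conjsg1 eqxx. Qed.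

Lemma cls01 H K I : cls H K I = 0%R \/ cls H K I = 1%R.
Proof. by rewrite /cls; case: ifP; [right|left]. Qed.

Lemma cls_ne0 H K I : cls H K I != 0%R -> exists2 l, l \in H & I = (K :^ l)%G.
Proof.
rewrite /cls; case: existsP => // -[l /andP[lH /eqP e]] _; exists l => //.
exact: val_inj.
Qed.

Lemma Atil_mul H (y x : func gT) :
  (forall I h, I \subset H -> h \in H -> y (I :^ h)%G = y I) -> Atil H x -> Atil H (fmul y x).
Proof.
move=> hy [x0 xi]; split=> [I nI|I h sIH hH]; rewrite /fmul.
  by rewrite x0 // mulr0.
by rewrite hy // xi.
Qed.

Lemma Atil_inv H x : Atil H x -> forall I h, I \subset H -> h \in H -> x (I :^ h)%G = x I.
Proof. by case. Qed.

Arguments cls_Atil {H K}. Arguments Atil_inv {H x}.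
Lemma Atil_scale H c x : Atil H x -> Atil H (fun I => c * x I)%R.
Proof. move=> [x0 xi]; split=> [I nI|I h sIH hH]; first by rewrite x0 ?mulr0. by rewrite xi. Qed.

Lemma dc_conj_le (K H L : {set gT}) (l : gT) (L' : {group gT}) :
  l \in L' -> #|dcosets (K :^ l) H L'| <= #|dcosets K H L'|.
Proof.
move=> lL.
apply: (@leq_trans #|[set l^-1 *: X | X in dcosets K H L']|); last exact: leq_imset_card.
apply: subset_leq_card; apply/subsetP => Y /imsetP [g gL ->].
apply/imsetP; exists ((K :* (l * g)) * H).
  by apply/imsetP; exists (l * g) => //; rewrite groupM.
by rewrite conjsgE rcosetM !mulgA.
Qed.

Lemma dc_conj (K H : {set gT}) (l : gT) (L' : {group gT}) :
  l \in L' -> #|dcosets (K :^ l) H L'| = #|dcosets K H L'|.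
Proof.
move=> lL; apply/eqP; rewrite eqn_leq dc_conj_le //=.
by rewrite -{1}(conjsgK l K) dc_conj_le // groupV.
Qed.

Lemma dc_le (K H : {set gT}) (L' : {group gT}) :
  #|dcosets K H L'| <= #|dcosets K 1 L'|.
Proof.
apply: (@leq_trans #|[set X * H | X in dcosets K 1 L']|); last exact: leq_imset_card.
apply: subset_leq_card; apply/subsetP => Y /imsetP [g gL ->].
apply/imsetP; exists ((K :* g) * 1); first by apply/imsetP; exists g.
by rewrite mulg1.
Qed.

Variable G : {group gT}.
Variable P : {group gT} -> func gT -> Prop.
Hypothesis tP : tambara_ideal G P.

Lemma hI H : H \subset G -> is_ideal H (P H).
Proof. by move=> sHG; move: tP; rewrite /tambara_ideal => -[] hi _ _ _ _; apply: hi. Qed.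
Lemma P_Atil H a : H \subset G -> P H a -> Atil H a.
Proof. by move=> /hI; rewrite /is_ideal => -[] h _ _ _ _; apply: h. Qed.
Lemma P_0 H : H \subset G -> P H (@fzero gT).
Proof. by move=> /hI; rewrite /is_ideal => -[] _ h _ _ _; apply: h. Qed.
Lemma P_add H a b : H \subset G -> P H a -> P H b -> P H (fadd a b).
Proof. by move=> /hI; rewrite /is_ideal => -[] _ _ h _ _; apply: h. Qed.
Lemma P_mul H r a : H \subset G -> Atil H r -> P H a -> P H (fmul r a).
Proof. by move=> /hI; rewrite /is_ideal => -[] _ _ _ _ h; apply: h. Qed.
Lemma P_res H K b : H \subset K -> K \subset G -> P K b -> P H (res H b).
Proof. by move: tP; rewrite /tambara_ideal => -[] _ h _ _ _; apply: h. Qed.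
Lemma P_tr H K a : H \subset K -> K \subset G -> P H a -> P K (tr K H a).
Proof. by move: tP; rewrite /tambara_ideal => -[] _ _ h _ _; apply: h. Qed.
Lemma P_nm H K a : H \subset K -> K \subset G -> P H a -> P K (nm K H a).
Proof. by move: tP; rewrite /tambara_ideal => -[] _ _ _ h _; apply: h. Qed.
Lemma P_cj H g a : H \subset G -> g \in G -> P H a -> P (H :^ g^-1)%G (cj g a).
Proof. by move: tP; rewrite /tambara_ideal => -[] _ _ _ _ h; apply: h. Qed.

Arguments P_Atil {H a}. Arguments P_0 {H}. Arguments P_add {H a b}. Arguments P_mul {H r a}.
Arguments P_res {H K b}. Arguments P_tr {H K a}. Arguments P_nm {H K a}. Arguments P_cj {H g a}.
Lemma Dec H v : H \subset G -> Atil H v ->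
  (forall K, K \subset H -> v K != 0%R -> exists2 w, P H w & exists r, v K = (r * w K)%R) ->
  P H v.
Proof.
move=> sHG.
have [n] := ubnP #|[set I : {group gT} | v I != 0%R]|.
elim: n v => // n IH v hn Av hv.
case: (boolP [exists K, v K != 0%R]); last first.
  move/existsPn=> h0; have -> : v = @fzero gT.
    by apply: funeq => I; apply/eqP; move: (h0 I); rewrite negbK.
  exact: P_0.
move/existsP=> [K nzK].
have sKH : K \subset H.
  by apply: contraR nzK => nK; case: Av => -> //.
have [w Pw [r er]] := hv K sKH nzK.
have Aw := P_Atil sHG Pw.
have Ae := cls_Atil sKH.
pose u1 := fmul (fun I => r * cls H K I)%R w.
pose u2 := fmul (fun I => 1 - cls H K I)%R v.
have -> : v = fadd u1 u2.
  apply: funeq => I; rewrite /fadd /u1 /u2 /fmul.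
  case: (cls01 H K I) => e.
    by rewrite e !mulr0 subr0 mul1r mul0r add0r.
  have [l lH eI] : exists2 l, l \in H & I = (K :^ l)%G by apply: cls_ne0; rewrite e.
  by rewrite e subrr mul0r addr0 mulr1 eI (Atil_inv Av) // (Atil_inv Aw) // er.
apply: P_add => //.
  by apply: P_mul => //; apply: Atil_scale.
have Au2 : Atil H u2.
  apply: Atil_mul => // I h sIH hH; by rewrite (Atil_inv Ae).
apply: IH => //.
  apply: (@leq_trans #|[set I : {group gT} | v I != 0%R]|); last by rewrite -ltnS.
  apply: proper_card; apply/properP; split.
    apply/subsetP => I; rewrite !inE /u2 /fmul; apply: contraNneq => ->; by rewrite mulr0.
  exists K; first by rewrite inE.
  by rewrite inE /u2 /fmul cls_self subrr mul0r eqxx.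
move=> K' sK'H; rewrite /u2 /fmul.
case: (cls01 H K K') => ->; last by rewrite subrr mul0r eqxx.
rewrite subr0 mul1r => nz; exact: hv.
Qed.

Lemma Key (prP : prime_tambara_ideal G P) (P1 : forall a, P 1%G a <-> (forall I, a I = 0%R))
  K1 a (m : int) : K1 \subset G -> m != 0%R -> Atil K1 a -> P K1 (fun I => m * a I)%R -> P K1 a.
Proof.
move=> sK1G m0 Aa Pma.
pose b : func gT := fun J => if (J : {set gT}) \subset [1 gT] then m else 0%R.
have Ab : Atil 1%G b.
  split=> [J nJ|J h sJ h1]; first by rewrite /b (negbTE nJ).
  by move: h1; rewrite inE => /eqP ->; rewrite /b /= conjsg1.
move: prP; rewrite /prime_tambara_ideal => -[] _ _ pr.
case: (pr K1 1%G a b sK1G (sub1G _) Aa Ab); last 2 first.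
- by [].
- move/P1/(_ 1%G); rewrite /b sub1G => e; by rewrite e eqxx in m0.
move=> L H1 H2 g1 g2 sLG sH1K1 sH21 g1G g2G sH1L sH2L.
have sH1G : H1 \subset G by apply: subset_trans sK1G.
pose H1' := (H1 :^ g1^-1)%G.
pose W := nm L H1' (cj g1 (res H1 (fun I => m * a I)%R)).
have PW : P L W.
  apply: P_nm => //; apply: P_cj => //; exact: P_res Pma.
pose N1 (K : {group gT}) := #|dcosets K H1' L|.
pose N2 (K : {group gT}) := #|dcosets K 1 L|.
pose r : func gT := fun K => if K \subset L then (m ^+ (N2 K - N1 K))%R else 0%R.
have Ar : Atil L r.
  split=> [K nK|K h sKL hL]; first by rewrite /r (negbTE nK).
  rewrite /r /= sKL -{1}(conjGid hL) conjSg sKL /N1 /N2 /=.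
  by rewrite !dc_conj.
have -> : fmul (nm L (H1 :^ g1^-1)%G (cj g1 (res H1 a))) (nm L (H2 :^ g2^-1)%G (cj g2 (res H2 b)))
   = fmul r W.
  apply: funeq => K; rewrite /fmul /r /W /nm.
  case: ifP => sKL; last by rewrite !mulr0.
  have eY : (\prod_(D in dcosets K (H2 :^ g2^-1)%G L)
      cj g2 (res H2 b) (K :^ repr D :&: H2 :^ g2^-1)%G = m ^+ N2 K)%R.
    move/trivGP: sH21 => eH2; subst H2.
    rewrite /N2 /= conjs1g -prodr_const; apply: eq_bigr => D _.
    rewrite /cj /res /b /=.
    have -> : (K :^ repr D :&: 1 :^ g2^-1) :^ g2 \subset [1 gT] by rewrite sub_conjg !conjs1g subsetIr.
    by [].
  have eW : (\prod_(D in dcosets K H1' L)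
      cj g1 (res H1 (fun I => m * a I)%R) (K :^ repr D :&: H1')%G =
      m ^+ N1 K * \prod_(D in dcosets K H1' L) cj g1 (res H1 a) (K :^ repr D :&: H1')%G)%R.
    rewrite /N1 -prodr_const -big_split /=; apply: eq_bigr => D _.
    by rewrite /cj /res; case: ifP => _; rewrite ?mulr0.
  rewrite eY eW mulrA -exprD subnK ?dc_le // mulrC.
  by [].
exact: P_mul.
Qed.
End Proof.
Arguments funeq {gT a b}.
Arguments cls {gT}. Arguments cls01 {gT}. Arguments cls_ne0 {gT H K I}. Arguments cls_self {gT}.
Arguments cls_Atil {gT H K}. Arguments Atil_inv {gT H x}. Arguments Atil_scale {gT H c x}.
Arguments P_Atil {gT G P} tP {H a}. Arguments P_mul {gT G P} tP {H r a}.
Arguments P_res {gT G P} tP {H K b}. Arguments P_tr {gT G P} tP {H K a}.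
Arguments Key {gT G P} tP prP P1 {K1 a m}. Arguments Dec {gT G P} tP {H v}.

Theorem proposition4p12 (gT : finGroupType) (G : {group gT})
    (P : {group gT} -> func gT -> Prop) (p : {group gT} -> nat) :
  prime_tambara_ideal G P ->
  (* P(G/e) = (0) *)
  (forall a, P 1%G a <-> (forall I, a I = 0%R)) ->
  (* p_I is a conjugation-invariant family with P(G/G) = A~(G) cap prod p_I Z *)
  (forall (I : {group gT}) g, I \subset G -> g \in G -> p (I :^ g)%G = p I) ->
  (forall a, P G a <->
     Atil G a /\ forall I : {group gT}, I \subset G -> ((p I)%:Z %| a I)%Z) ->
  (forall I : {group gT}, I \subset G -> (p I != 1%N) = (p I == 0%N)) /\
  (forall H : {group gT}, H \subset G ->
     forall a, P H a <-> Pideal (fun I => p I != 1%N) 0 H a).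
Proof.
move=> prP P1 pconj PG.
have tP : tambara_ideal G P by move: prP; rewrite /prime_tambara_ideal => -[].
have PGcls : forall (K : {group gT}) (c : int), K \subset G -> ((p K)%:Z %| c)%Z ->
    P G (fun I => c * cls G K I)%R.
  move=> K c sKG dc; apply/PG; split; first exact: Atil_scale (cls_Atil sKG).
  move=> I sIG; case: (cls01 G K I) => e; rewrite e ?mulr0 ?dvdz0 // mulr1.
  have [l lG ->] : exists2 l, l \in G & I = (K :^ l)%G by apply: cls_ne0; rewrite e.
  by rewrite pconj.
have part1 : forall I : {group gT}, I \subset G -> (p I != 1%N) = (p I == 0%N).
  move=> I sIG; case: (p I =P 0%N) => [-> //|pn0].
  apply: negbTE; apply/negPn.
  have : P G (cls G I).
    apply: (Key tP prP P1 (m := (p I)%:Z)) => //.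
    - by apply/eqP => /eqP; rewrite eqz_nat => /eqP.
    - exact: cls_Atil.
    - exact: PGcls.
  move/PG => [_ /(_ I sIG)]; rewrite cls_self dvdz1.
  by [].


split => // H sHG a; split.
  move=> Pa; rewrite /Pideal; split; first exact: (@P_Atil gT G P tP H a sHG Pa).
  move=> I sIH; have sIG := subset_trans sIH sHG.
  rewrite part1 //; case: eqP => p0 /=; last exact: dvd1z.
  rewrite dvd0z.
  have Pu := P_mul tP sHG (cls_Atil sIH) Pa.
  have Ptu := P_tr tP sHG (subxx G) Pu.
  move/PG: Ptu => [_ /(_ I sIG)]; rewrite p0 dvd0z /tr sIG.
  have Aa := P_Atil tP sHG Pa.
  rewrite (eq_bigr (fun C => cls H I (I :^ repr C)%G * a I)%R); last first.
    move=> C /andP[_ sC]; rewrite /fmul; case: (cls01 H I (I :^ repr C)%G) => e; rewrite e ?mul0r //.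
    have [l lH ->] : exists2 l, l \in H & (I :^ repr C)%G = (I :^ l)%G by apply: cls_ne0; rewrite e.
    by rewrite (Atil_inv Aa).
  rewrite -mulr_suml mulf_eq0 => /orP[|//].
  have HC : (H : {set gT}) \in lcosets H G.
    by apply/lcosetsP; exists 1; rewrite ?group1 ?lcoset1.
  rewrite (bigD1 (H : {set gT})) /=; last by rewrite HC repr_group conjsg1 sIH.
  have -> : (I :^ repr H)%G = I by apply: val_inj; rewrite /= repr_group conjsg1.
  rewrite cls_self.
  have s0 : (0 <= \sum_(i in lcosets H G | (I :^ repr i \subset H) && (i != H)) cls H I (I :^ repr i)%G)%R.
    by apply: sumr_ge0 => C _; case: (cls01 H I (I :^ repr C)%G) => ->.
  move=> /eqP h; suff : (0 < 0 :> int)%R by []; rewrite -[X in (_ < X)%R]h.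
  apply: ltr_wpDr ltr01; apply: sumr_ge0 => C _; by case: (cls01 H I (I :^ repr C)%G) => ->.
move=> [Aa hdiv]; apply: (Dec tP sHG Aa) => K sKH nz.
have sKG := subset_trans sKH sHG.
have pK : p K = 1%N.
  apply/eqP; apply: contraR nz => pK; move: (hdiv K sKH); rewrite pK dvd0z => /eqP ->.
  by rewrite eqxx.
exists (res H (cls G K)).
  apply: (@P_res gT G P tP H G (cls G K) sHG (subxx G)).
  have := PGcls K 1%R sKG; rewrite pK dvd1z => /(_ isT).
  by congr (P G _); apply: funeq => I; rewrite mul1r.
by exists (a K); rewrite /res sKH cls_self mulr1.
Qed.
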